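(* Let $G$ be a connected Lie group with identity $e$ and consider a discrete-time linear control system on $G$ with control range $U\subset\mathbb{R}^m$ a compact neighborhood of $0$. Let $g\in\mathcal{R}$ be such that $f_0^k(g)\in\mathcal{R}$ for all $k\in\mathbb{Z}$. Then $\mathcal{R}\cdot g\subset\mathcal{R}$.
   Context: A discrete-time linear control system on $G$ is given by $f:G\times U\to G$, $f_u:=f(\cdot,u)$, such that $f_0$ is an automorphism of $G$ and $f_u(g)=f_u(e)f_0(g)$ for all $g\in G,u\in U$. Solutions: $\varphi(0,g,u)=g$, $\varphi(k,g,u)=f_{u_{k-1}}\circ\cdots\circ f_{u_0}(g)$ for $u=(u_i)\in U^{\mathbb{N}_0}$; $\mathcal{R}=\bigcup_{k\in\mathbb{N}}\{\varphi(k,e,u)\}$. *)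

(* Defs.v *)
From HB Require Import structures.
From mathcomp Require Import all_boot all_order all_algebra.
From mathcomp Require Import all_classical all_reals all_analysis.
Set Implicit Arguments. Unset Strict Implicit. Unset Printing Implicit Defensive.
Import Order.TTheory GRing.Theory Num.Theory.
Import numFieldTopology.Exports numFieldNormedType.Exports.
Local Open Scope classical_set_scope.

Definition is_group (G : Type) (mul : G -> G -> G) (inv : G -> G) (e : G) : Prop :=
  (forall x y z, mul x (mul y z) = mul (mul x y) z) /\
  (forall x, mul e x = x) /\ (forall x, mul x e = x) /\
  (forall x, mul (inv x) x = e) /\ (forall x, mul x (inv x) = e).

Definition is_topological_group (G : topologicalType)
  (mul : G -> G -> G) (inv : G -> G) (e : G) : Prop :=
  is_group mul inv e /\
  continuous (fun p : G * G => mul p.1 p.2) /\ continuous inv.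

Definition is_automorphism (G : Type) (mul : G -> G -> G) (phi : G -> G) : Prop :=
  bijective phi /\ forall x y, phi (mul x y) = mul (phi x) (phi y).

Definition is_dt_linear_system (G V : Type) (zero : V) (mul : G -> G -> G) (e : G)
  (U : set V) (f : G -> V -> G) : Prop :=
  is_automorphism mul (fun g => f g zero) /\
  forall g u, U u -> f g u = mul (f e u) (f g zero).

Fixpoint sol (G V : Type) (f : G -> V -> G) (k : nat) (g : G) (u : nat -> V) : G :=
  match k with
  | 0 => g
  | k'.+1 => f (sol f k' g u) (u k')
  end.

Definition reach (G V : Type) (U : set V) (f : G -> V -> G) (e : G) : set G :=
  [set y | exists k : nat, exists u : nat -> V,
     (0 < k)%N /\ (forall i, U (u i)) /\ y = sol f k e u].

(* Graph of the integer powers of a (bijective) map f0: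
   zpow_rel f0 k g y  <->  y = f0^k(g), for k : int. *)
Definition zpow_rel (G : Type) (f0 : G -> G) (k : int) (g y : G) : Prop :=
  match k with
  | Posz n => y = iter n f0 g
  | Negz n => iter n.+1 f0 y = g
  end.

(* Main.v *)
Require Import Defs.
From HB Require Import structures.
From mathcomp Require Import all_boot all_order all_algebra.
From mathcomp Require Import all_classical all_reals all_analysis.
Import Order.TTheory GRing.Theory Num.Theory.
Import numFieldTopology.Exports numFieldNormedType.Exports.
Local Open Scope classical_set_scope.
Local Open Scope ring_scope.

Lemma sol_ext (G V : Type) (f : G -> V -> G) (x : G) (u w : nat -> V) n :
  (forall i, (i < n)%N -> u i = w i) -> sol f n x u = sol f n x w.
Proof.
elim: n => [//|n IH] H /=.
rewrite IH; last by move=> i Hi; apply: H; apply: ltn_trans Hi _.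
by rewrite H.
Qed.

Lemma sol_cat (G V : Type) (f : G -> V -> G) (x : G) (v u : nat -> V) n j :
  sol f (n + j) x (fun i => if (i < n)%N then v i else u (i - n)%N)
  = sol f j (sol f n x v) u.
Proof.
elim: j => [|j IH].
  rewrite addn0; apply: sol_ext => i Hi; by rewrite Hi.
rewrite addnS /= IH.
have -> : (n + j < n)%N = false by rewrite ltnNge leq_addr.
by rewrite addKn.
Qed.

Lemma sol_lin (G V : Type) (zero : V) (mul : G -> G -> G) (e : G)
  (U : set V) (f : G -> V -> G) :
  (forall x y z, mul x (mul y z) = mul (mul x y) z) ->
  (forall x, mul e x = x) ->
  is_dt_linear_system zero mul e U f ->
  forall k y u, (forall i, U (u i)) ->
  sol f k y u = mul (sol f k e u) (iter k (fun x => f x zero) y).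
Proof.
move=> Ha He [[_ Hm] Hl] k y u Hu; elim: k => [|k IH] /=.
  by rewrite He.
rewrite IH (Hl _ _ (Hu k)) (Hl (sol f k e u) _ (Hu k)) Hm.
by rewrite -!Ha.
Qed.

Theorem lemma2p15 (R : realType) (m : nat) (G : topologicalType)
  (mul : G -> G -> G) (inv : G -> G) (e : G)
  (HG : is_topological_group mul inv e) (Hconn : connected [set: G])
  (U : set 'rV[R]_m) (HUc : compact U) (HUn : nbhs (0 : 'rV[R]_m) U)
  (f : G -> 'rV[R]_m -> G) (Hf : is_dt_linear_system 0 mul e U f)
  (g : G) (Hg : reach U f e g)
  (Hpow : forall (k : int) (y : G), zpow_rel (fun x => f x 0) k g y -> reach U f e y) :
  forall h, reach U f e h -> reach U f e (mul h g).
Proof.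
move: (HG) => [[Ha [He _]] _].
move=> h [k [u [Hk [Hu ->]]]].
move: (Hf) => [[[finv _ Hfk] _] _].
set y := iter k finv g.
have Hy : iter k (fun x => f x 0) y = g.
  rewrite /y; clear -Hfk; elim: k g => [//|j IH] x.
  by rewrite iterSr iterS Hfk IH.
have : reach U f e y.
  apply: (Hpow (Negz k.-1)) => /=.
  by move: Hk; case: (k) Hy.

move=> [n [v [Hn [Hv Hyv]]]].
exists (n + k)%N, (fun i => if (i < n)%N then v i else u (i - n)%N).
split; first by rewrite addn_gt0 Hn.
split; first by move=> i; case: ifP.
by rewrite sol_cat -Hyv (@sol_lin _ _ _ _ _ _ _ Ha He Hf k y u Hu) Hy.
Qed.
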